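(* Let $(\mathfrak{k},\partial)$ be a differential graded Lie algebra over a field of characteristic $0$, $\mathfrak{k}=\bigoplus_{i\le0}\mathfrak{k}^i$ with $\mathfrak{k}^i=0$ for $i\ll0$, and $\partial$ of degree $+1$. Assume there is a subspace $\mathfrak{l}$ of the center $\mathfrak{z}$ of $\mathfrak{k}$ such that $\partial$ vanishes on $\mathfrak{l}$ and the inclusion $\mathfrak{l}\hookrightarrow\mathfrak{k}$ induces an isomorphism in cohomology. Then: (1) for any even central element $X\in\mathfrak{z}$ with $\partial X=0$, the set of solutions $f\in\mathfrak{k}^-_{\mathrm{odd}}$ of $\partial f+\frac12[f,f]_{\mathfrak{k}}\equiv X\pmod{\mathfrak{l}}$ is a (nonempty) homogeneous space for the group $\exp(\mathfrak{k}^-_{\mathrm{even}})\times\mathfrak{l}^-_{\mathrm{odd}}$, where the first factor acts by gauge transformations and the second by translations; (2) the difference $\partial f+\frac12[f,f]_{\mathfrak{k}}-X\in\mathfrak{l}$ is independent of the solution $f$.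
   Context: $\mathfrak{k}^-=\bigoplus_{i<0}\mathfrak{k}^i$; ''even/odd'' refer to the parity of the degree $i$. $\mathfrak{k}^-_{\mathrm{even}}$ is an ordinary nilpotent Lie algebra; $\exp(\mathfrak{k}^-_{\mathrm{even}})$ denotes the corresponding group (the image of $s\mapsto\exp(s)=\sum_N s^N/N!$ in the degree completion of the enveloping algebra, with product given by the Campbell–Hausdorff formula). The gauge action on $\mathfrak{k}^-_{\mathrm{odd}}$ is $\exp(s).f=e^{\mathrm{ad}_s}f-j^R(\mathrm{ad}_s)\partial s$, where $j^R(z)=\frac{e^z-1}{z}$ and $\mathrm{ad}_s=[s,\cdot]_{\mathfrak{k}}$. Similarly $\mathfrak{l}^-_{\mathrm{odd}}=\mathfrak{l}\cap\mathfrak{k}^-_{\mathrm{odd}}$ (for the graded pieces), acting by translation $f\mapsto f+l$. *)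

(* Defs.v *)
From HB Require Import structures.
From mathcomp Require Import all_boot all_order all_algebra.
Set Implicit Arguments. Unset Strict Implicit. Unset Printing Implicit Defensive.
Import Order.TTheory GRing.Theory Num.Theory.
Local Open Scope ring_scope.

(* A graded vector space k = (+)_{i <= 0} k^i with k^i = 0 for i < -N is
   represented as a K-module V together with projections [proj n] onto the
   homogeneous component of degree -n (n : nat). *)

Section Defs.
Variables (K : fieldType) (V : lmodType K).

Definition homog (proj : nat -> V -> V) (n : nat) (x : V) : Prop := proj n x = x.

Definition grading (N : nat) (proj : nat -> {linear V -> V}) : Prop :=
  [/\ forall n m x, proj n (proj m x) = if n == m then proj m x else 0,
      forall n x, (N < n)%N -> proj n x = 0
    & forall x, \sum_(n < N.+1) proj n x = x].

Definition sgn (n : nat) : K := (-1) ^+ n.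

Definition dgla (N : nat) (proj : nat -> {linear V -> V})
  (br : V -> V -> V) (d : {linear V -> V}) : Prop :=
  grading N proj /\
      (forall a x y z, br (a *: x + y) z = a *: br x z + br y z)
      /\ (forall a x y z, br z (a *: x + y) = a *: br z x + br z y) /\
      (forall m n x y, homog proj m x -> homog proj n y ->
         homog proj (m + n) (br x y)) /\
      (forall m n x y, homog proj m x -> homog proj n y ->
         br x y = - (sgn (m * n) *: br y x)) /\
      (forall m n x y z, homog proj m x -> homog proj n y ->
         br x (br y z) = br (br x y) z + sgn (m * n) *: br y (br x z)) /\
      (forall n x, homog proj n.+1 x -> homog proj n (d x))
      /\ (forall x, homog proj 0 x -> d x = 0) /\
      (forall x, d (d x) = 0) /\
      (forall m x y, homog proj m x ->
         d (br x y) = br (d x) y + sgn m *: br x (d y)).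

Definition central (br : V -> V -> V) (x : V) : Prop := forall y, br x y = 0.

Definition kminus_odd (proj : nat -> V -> V) (x : V) : Prop :=
  forall n, ~~ odd n -> proj n x = 0.
Definition kminus_even (proj : nat -> V -> V) (x : V) : Prop :=
  forall n, odd n || (n == 0)%N -> proj n x = 0.
Definition even_elt (proj : nat -> V -> V) (x : V) : Prop :=
  forall n, odd n -> proj n x = 0.

(* l is a graded subspace of the center, killed by d, such that the
   inclusion l -> k is a quasi-isomorphism (degreewise iso on cohomology;
   since d = 0 on l, H(l) = l). *)
Definition central_quasi_iso (proj : nat -> V -> V) (br : V -> V -> V)
  (d : V -> V) (l : {pred V}) : Prop :=
  (0 \in l /\ (forall a x y, x \in l -> y \in l -> a *: x + y \in l)) /\
  [/\ (forall n x, x \in l -> proj n x \in l),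
      (forall x, x \in l -> central br x),
      (forall x, x \in l -> d x = 0),
      (* injectivity of H^{-n}(l) -> H^{-n}(k) *)
      (forall n x y, x \in l -> homog proj n x -> homog proj n.+1 y ->
         x = d y -> x = 0)
    & (* surjectivity of H^{-n}(l) -> H^{-n}(k) *)
      (forall n x, homog proj n x -> d x = 0 ->
         exists l0 y, [/\ l0 \in l, homog proj n l0, homog proj n.+1 y
                        & x = l0 + d y])].

Definition curv (br : V -> V -> V) (d : V -> V) (f : V) : V :=
  d f + 2%:R^-1 *: br f f.

(* gauge action  exp(s).f = e^{ad_s} f - j^R(ad_s) (d s),
   j^R(z) = (e^z - 1)/z = sum_m z^m/(m+1)!.  For s in k^-_even, ad_s lowers
   degree by at least 2, so ad_s^m = 0 for m > N and the truncated sums are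
   the full series. *)
Definition gauge (N : nat) (br : V -> V -> V) (d : V -> V) (s f : V) : V :=
  \sum_(m < N.+1) (m`!%:R)^-1 *: iter m (br s) f
  - \sum_(m < N.+1) ((m.+1)`!%:R)^-1 *: iter m (br s) (d s).

End Defs.

(* Main.v *)
Require Import Defs.
From HB Require Import structures.
From mathcomp Require Import all_boot all_order all_algebra.
From mathcomp Require Import zify.
Set Implicit Arguments. Unset Strict Implicit. Unset Printing Implicit Defensive.
Import Order.TTheory GRing.Theory Num.Theory.
Local Open Scope ring_scope.

Section Main.
Variables (K : fieldType) (V : lmodType K) (N : nat) (proj : nat -> {linear V -> V})
  (br : V -> V -> V) (d : {linear V -> V}).
Hypothesis Hk : dgla N proj br d.

Lemma brZDl a x y z : br (a *: x + y) z = a *: br x z + br y z.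
Proof. by case: Hk => _ [H _]. Qed.
Lemma brZDr a x y z : br z (a *: x + y) = a *: br z x + br z y.
Proof. by case: Hk => _ [_ [H _]]. Qed.
Lemma br0l z : br 0 z = 0.
Proof.
have H := brZDl 1 0 0 z; rewrite !scale1r !addr0 in H.
by apply: (addrI (br 0 z)); rewrite addr0 -H.
Qed.
Lemma br0r z : br z 0 = 0.
Proof.
have H := brZDr 1 0 0 z; rewrite !scale1r !addr0 in H.
by apply: (addrI (br z 0)); rewrite addr0 -H.
Qed.
Lemma brDl x y z : br (x + y) z = br x z + br y z.
Proof. by have := brZDl 1 x y z; rewrite !scale1r. Qed.
Lemma brDr x y z : br z (x + y) = br z x + br z y.
Proof. by have := brZDr 1 x y z; rewrite !scale1r. Qed.
Lemma brZl a x z : br (a *: x) z = a *: br x z.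
Proof. by rewrite -(addr0 (a *: x)) brZDl br0l addr0. Qed.
Lemma brZr a x z : br z (a *: x) = a *: br z x.
Proof. by rewrite -(addr0 (a *: x)) brZDr br0r addr0. Qed.
Lemma brNl x z : br (- x) z = - br x z.
Proof. by rewrite -scaleN1r brZl scaleN1r. Qed.
Lemma brNr x z : br z (- x) = - br z x.
Proof. by rewrite -scaleN1r brZr scaleN1r. Qed.
Lemma brBl x y z : br (x - y) z = br x z - br y z.
Proof. by rewrite brDl brNl. Qed.
Lemma brBr x y z : br z (x - y) = br z x - br z y.
Proof. by rewrite brDr brNr. Qed.
Lemma br_suml I (r : seq I) (P : pred I) (F : I -> V) z :
  br (\sum_(i <- r | P i) F i) z = \sum_(i <- r | P i) br (F i) z.
Proof. exact: (big_morph (fun x => br x z) (fun x y => brDl x y z) (br0l z)). Qed.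
Lemma br_sumr I (r : seq I) (P : pred I) (F : I -> V) z :
  br z (\sum_(i <- r | P i) F i) = \sum_(i <- r | P i) br z (F i).
Proof. exact: (big_morph (fun x => br z x) (fun x y => brDr x y z) (br0r z)). Qed.

Lemma projK n m x : proj n (proj m x) = if n == m then proj m x else 0.
Proof. by case: Hk => [[H _ _] _]. Qed.
Lemma proj_big n x : (N < n)%N -> proj n x = 0.
Proof. by case: Hk => [[_ H _] _]; apply: H. Qed.
Lemma proj_sum x : \sum_(n < N.+1) proj n x = x.
Proof. by case: Hk => [[_ _ H] _]. Qed.
Lemma proj_id n x : proj n (proj n x) = proj n x.
Proof. by rewrite projK eqxx. Qed.
Lemma homog_proj n x : homog (fun n => proj n) n (proj n x).
Proof. exact: proj_id. Qed.
Lemma proj_homog k j z : homog (fun n => proj n) j z -> proj k z = if k == j then z else 0.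
Proof. by rewrite /homog => <-; rewrite projK. Qed.

Lemma sum_delta (F : nat -> V) M j : (forall m, m != j -> F m = 0) ->
  ((M <= j)%N -> F j = 0) -> \sum_(m < M) F m = F j.
Proof.
move=> H1 H2; case: (ltnP j M) => hj.
  rewrite (bigD1 (Ordinal hj)) //= big1 ?addr0 // => i /eqP hi; apply: H1.
  by apply/eqP => e; apply: hi; apply: val_inj.
rewrite H2 // big1 // => i _; apply: H1; apply/eqP => e.
by move: (ltn_ord i); rewrite e ltnNge hj.
Qed.

Lemma decomp2 x y : br x y = \sum_(m < N.+1) \sum_(n < N.+1) br (proj m x) (proj n y).
Proof.
rewrite -{1}(proj_sum x) br_suml; apply: eq_bigr => m _.
by rewrite -{1}(proj_sum y) br_sumr.
Qed.

(* P p x : x lives in degrees <= -p *)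
Definition P p x := forall n, (n < p)%N -> proj n x = 0.
Definition par (b : bool) x := forall n, odd n != b -> proj n x = 0.

Lemma P0 p : P p 0. Proof. by move=> n _; rewrite linear0. Qed.
Lemma PD p x y : P p x -> P p y -> P p (x + y).
Proof. by move=> hx hy n hn; rewrite linearD hx ?hy ?addr0. Qed.
Lemma PN p x : P p x -> P p (- x).
Proof. by move=> hx n hn; rewrite linearN hx ?oppr0. Qed.
Lemma PB p x y : P p x -> P p y -> P p (x - y).
Proof. by move=> hx hy; apply: PD => //; apply: PN. Qed.
Lemma PZ p a x : P p x -> P p (a *: x).
Proof. by move=> hx n hn; rewrite linearZZ hx ?scaler0. Qed.
Lemma P_sum p I (r : seq I) (Q : pred I) (F : I -> V) :
  (forall i, Q i -> P p (F i)) -> P p (\sum_(i <- r | Q i) F i).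
Proof. by move=> H; apply: (@big_ind V (P p)) => //; [apply: P0 | apply: PD]. Qed.
Lemma P_le p q x : (q <= p)%N -> P p x -> P q x.
Proof. by move=> hqp hx n hn; apply: hx; apply: leq_trans hqp. Qed.
Lemma P_top x : P N.+1 x -> x = 0.
Proof. by move=> hx; rewrite -(proj_sum x) big1 // => i _; apply: hx. Qed.

Lemma par0 b : par b 0. Proof. by move=> n _; rewrite linear0. Qed.
Lemma parD b x y : par b x -> par b y -> par b (x + y).
Proof. by move=> hx hy n hn; rewrite linearD hx ?hy ?addr0. Qed.
Lemma parN b x : par b x -> par b (- x).
Proof. by move=> hx n hn; rewrite linearN hx ?oppr0. Qed.
Lemma parB b x y : par b x -> par b y -> par b (x - y).
Proof. by move=> hx hy; apply: parD => //; apply: parN. Qed.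
Lemma parZ b a x : par b x -> par b (a *: x).
Proof. by move=> hx n hn; rewrite linearZZ hx ?scaler0. Qed.
Lemma par_sum b I (r : seq I) (Q : pred I) (F : I -> V) :
  (forall i, Q i -> par b (F i)) -> par b (\sum_(i <- r | Q i) F i).
Proof. by move=> H; apply: (@big_ind V (par b)) => //; [apply: par0 | apply: parD]. Qed.

Lemma br_homog m n x y : homog (fun n => proj n) m x -> homog (fun n => proj n) n y ->
  homog (fun n => proj n) (m + n) (br x y).
Proof. by case: Hk => _ [_ [_ [H _]]]; apply: H. Qed.

Lemma P_br p q x y : P p x -> P q y -> P (p + q) (br x y).
Proof.
move=> hx hy k hk; rewrite decomp2 linear_sum big1 // => m _.
rewrite linear_sum big1 // => n _.
case: (ltnP m p) => hm; first by rewrite hx // br0l linear0.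
case: (ltnP n q) => hn; first by rewrite hy // br0r linear0.
rewrite (proj_homog _ (br_homog (homog_proj _ _) (homog_proj _ _))).
case: eqP => // e; move: hk; rewrite e ltnNge => /negP; case.
exact: leq_add.
Qed.

Lemma par_br b c x y : par b x -> par c y -> par (b (+) c) (br x y).
Proof.
move=> hx hy k hk; rewrite decomp2 linear_sum big1 // => m _.
rewrite linear_sum big1 // => n _.
case: (eqVneq (odd m) b) => hm; last by rewrite hx // br0l linear0.
case: (eqVneq (odd n) c) => hn; last by rewrite hy // br0r linear0.
rewrite (proj_homog _ (br_homog (homog_proj _ _) (homog_proj _ _))).
case: eqP => // e; move: hk; by rewrite e oddD hm hn eqxx.
Qed.

Lemma antisym m n x y : homog (fun n => proj n) m x -> homog (fun n => proj n) n y ->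
  br x y = - (sgn K (m * n) *: br y x).
Proof. by case: Hk => _ [_ [_ [_ [H _]]]]; apply: H. Qed.
Lemma jacobi m n x y z : homog (fun n => proj n) m x -> homog (fun n => proj n) n y ->
  br x (br y z) = br (br x y) z + sgn K (m * n) *: br y (br x z).
Proof. by case: Hk => _ [_ [_ [_ [_ [H _]]]]]; apply: H. Qed.
Lemma d_homog n x : homog (fun n => proj n) n.+1 x -> homog (fun n => proj n) n (d x).
Proof. by case: Hk => _ [_ [_ [_ [_ [_ [H _]]]]]]; apply: H. Qed.
Lemma d_homog0 x : homog (fun n => proj n) 0 x -> d x = 0.
Proof. by case: Hk => _ [_ [_ [_ [_ [_ [_ [H _]]]]]]]; apply: H. Qed.
Lemma dd x : d (d x) = 0.
Proof. by case: Hk => _ [_ [_ [_ [_ [_ [_ [_ [H _]]]]]]]]; apply: H. Qed.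
Lemma leibniz m x y : homog (fun n => proj n) m x ->
  d (br x y) = br (d x) y + sgn K m *: br x (d y).
Proof. by case: Hk => _ [_ [_ [_ [_ [_ [_ [_ [_ H]]]]]]]]; apply: H. Qed.

Lemma sgn_odd n : sgn K n = if odd n then -1 else 1.
Proof. by rewrite /sgn -signr_odd; case: (odd n); rewrite ?expr1 ?expr0. Qed.

Lemma proj_d n x : proj n (d x) = d (proj n.+1 x).
Proof.
rewrite -{1}(proj_sum x) linear_sum linear_sum.
rewrite (@sum_delta (fun m => proj n (d (proj m x))) _ n.+1).
- by rewrite (proj_homog _ (d_homog (homog_proj _ _))) eqxx.
- case=> [|m] hm; first by rewrite d_homog0 ?linear0 //; apply: homog_proj.
  rewrite (proj_homog _ (d_homog (homog_proj _ _))); case: eqP => // e.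
  by move: hm; rewrite e eqxx.
- by move=> h; rewrite (@proj_big n.+1 x h) !linear0.
Qed.

Lemma P_d p x : P p.+1 x -> P p (d x).
Proof. by move=> hx n hn; rewrite proj_d hx ?linear0. Qed.
Lemma par_d b x : par b x -> par (~~ b) (d x).
Proof.
move=> hx n hn; rewrite proj_d hx ?linear0 //.
by move: hn => /=; case: (odd n); case: (b).
Qed.

Definition eps (b : bool) : K := if b then -1 else 1.


Lemma antisym_par b c x y : par b x -> par c y -> br x y = - (eps (b && c) *: br y x).
Proof.
move=> hx hy; rewrite decomp2 (decomp2 y x) [in RHS]exchange_big /= scaler_sumr -sumrN.
apply: eq_bigr => m _; rewrite scaler_sumr -sumrN; apply: eq_bigr => n _.
case: (eqVneq (odd m) b) => hm; last by rewrite hx // br0l br0r scaler0 oppr0.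
case: (eqVneq (odd n) c) => hn; last by rewrite hy // br0l br0r scaler0 oppr0.
rewrite (antisym (homog_proj _ _) (homog_proj _ _)) sgn_odd oddM hm hn.
by rewrite /eps.
Qed.

Lemma jacobi_par b c x y z : par b x -> par c y ->
  br x (br y z) = br (br x y) z + eps (b && c) *: br y (br x z).
Proof.
move=> hx hy.
have h1 : br x (br y z) = \sum_(m < N.+1) \sum_(n < N.+1) br (proj m x) (br (proj n y) z).
  rewrite -{1}(proj_sum x) br_suml; apply: eq_bigr => m _.
  by rewrite -{1}(proj_sum y) br_suml br_sumr.
have h2 : br (br x y) z = \sum_(m < N.+1) \sum_(n < N.+1) br (br (proj m x) (proj n y)) z.
  by rewrite (decomp2 x y) br_suml; apply: eq_bigr => m _; rewrite br_suml.
have h3 : br y (br x z) = \sum_(m < N.+1) \sum_(n < N.+1) br (proj n y) (br (proj m x) z).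
  rewrite exchange_big /= -{1}(proj_sum y) br_suml; apply: eq_bigr => n _.
  by rewrite -{1}(proj_sum x) br_suml br_sumr.
rewrite h1 h2 h3 scaler_sumr -big_split /=; apply: eq_bigr => m _.
rewrite scaler_sumr -big_split /=; apply: eq_bigr => n _.
case: (eqVneq (odd m) b) => hm; last by rewrite hx // !br0l br0r scaler0 addr0.
case: (eqVneq (odd n) c) => hn; last by rewrite hy // !br0l br0r !br0l scaler0 addr0.
by rewrite (jacobi _ (homog_proj _ _) (homog_proj _ _)) sgn_odd oddM hm hn.
Qed.

Lemma leibniz_par b x y : par b x -> d (br x y) = br (d x) y + eps b *: br x (d y).
Proof.
move=> hx; rewrite -(proj_sum x) br_suml !linear_sum !br_suml.
rewrite scaler_sumr -big_split; apply: eq_bigr => m _ /=.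
case: (eqVneq (odd m) b) => hm; last by rewrite hx // br0l !linear0 br0l br0l scaler0 addr0.
by rewrite (leibniz _ (homog_proj _ _)) sgn_odd hm.
Qed.

Hypothesis charK : [pchar K] =i pred0.
Lemma natS_neq0 n : (n.+1)%:R != 0 :> K.
Proof. by rewrite ((pcharf0P K).1 charK n.+1). Qed.
Lemma fact_neq0 n : (n`!)%:R != 0 :> K.
Proof. by rewrite ((pcharf0P K).1 charK) -lt0n fact_gt0. Qed.
Lemma half_double (x : V) : (2%:R : K)^-1 *: (x + x) = x.
Proof.
rewrite -mulr2n -(@scaler_nat K V) scalerA mulVf ?scale1r //.
exact: (natS_neq0 1).
Qed.

Definition zc z := forall n y, br (proj n z) y = 0.
Lemma zc_l z y : zc z -> br z y = 0.
Proof. by move=> hz; rewrite -(proj_sum z) br_suml big1 // => n _; apply: hz. Qed.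
Lemma zc_r z y : zc z -> br y z = 0.
Proof.
move=> hz; rewrite decomp2 big1 // => m _; rewrite big1 // => n _.
by rewrite (antisym (homog_proj _ _) (homog_proj _ _)) hz scaler0 oppr0.
Qed.
Lemma zcD x y : zc x -> zc y -> zc (x + y).
Proof. by move=> hx hy n z; rewrite linearD brDl hx hy addr0. Qed.
Lemma zcN x : zc x -> zc (- x).
Proof. by move=> hx n z; rewrite linearN brNl hx oppr0. Qed.

Lemma central_zc X : central br X -> zc X.
Proof.
move=> hX n y; rewrite -(proj_sum y) br_sumr big1 // => k _.
have e : proj (n + k) (br X (proj k y)) = br (proj n X) (proj k y).
  rewrite -{1}(proj_sum X) br_suml linear_sum.
  rewrite (@sum_delta (fun j => proj (n + k) (br (proj j X) (proj k y))) _ n).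
  - by rewrite (proj_homog _ (br_homog (homog_proj _ _) (homog_proj _ _))) eqxx.
  - move=> j hj; rewrite (proj_homog _ (br_homog (homog_proj _ _) (homog_proj _ _))).
    by rewrite eqn_add2r eq_sym (negPf hj).
  - by move=> hn; rewrite (@proj_big n X hn) br0l linear0.
by rewrite -e hX linear0.
Qed.

Variable l : {pred V}.
Hypothesis Hl : central_quasi_iso (fun n => proj n) br d l.
Lemma l0 : 0 \in l. Proof. by case: Hl => [[]]. Qed.
Lemma lZD a x y : x \in l -> y \in l -> a *: x + y \in l.
Proof. by case: Hl => [[_ H] _]; apply: H. Qed.
Lemma lD x y : x \in l -> y \in l -> x + y \in l.
Proof. by move=> hx hy; have := lZD 1 hx hy; rewrite scale1r. Qed.
Lemma lN x : x \in l -> - x \in l.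
Proof. by move=> hx; have := lZD (-1) hx l0; rewrite scaleN1r addr0. Qed.
Lemma lB x y : x \in l -> y \in l -> x - y \in l.
Proof. by move=> hx hy; apply: lD => //; apply: lN. Qed.
Lemma l_proj n x : x \in l -> proj n x \in l.
Proof. by case: Hl => _ [H _ _ _ _]; apply: H. Qed.
Lemma l_central x : x \in l -> central br x.
Proof. by case: Hl => _ [_ H _ _ _]; apply: H. Qed.
Lemma l_d x : x \in l -> d x = 0.
Proof. by case: Hl => _ [_ _ H _ _]; apply: H. Qed.
Lemma l_inj n x y : x \in l -> homog (fun n => proj n) n x -> homog (fun n => proj n) n.+1 y ->
  x = d y -> x = 0.
Proof. by case: Hl => _ [_ _ _ H _]; apply: H. Qed.
Lemma l_surj n x : homog (fun n => proj n) n x -> d x = 0 ->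
  exists l0 y, [/\ l0 \in l, homog (fun n => proj n) n l0, homog (fun n => proj n) n.+1 y
                 & x = l0 + d y].
Proof. by case: Hl => _ [_ _ _ _ H]; apply: H. Qed.
Lemma l_sum I (r : seq I) (Q : pred I) (F : I -> V) :
  (forall i, Q i -> F i \in l) -> \sum_(i <- r | Q i) F i \in l.
Proof. by move=> H; apply: (@big_ind V (fun x => x \in l)) => //; [apply: l0 | apply: lD]. Qed.
Lemma l_of_proj x : (forall n, (n < N.+1)%N -> proj n x \in l) -> x \in l.
Proof. by move=> H; rewrite -(proj_sum x); apply: l_sum => i _; apply: H. Qed.
Lemma zc_of_l x : x \in l -> zc x.
Proof. by move=> hx n y; apply: l_central; apply: l_proj. Qed.

Lemma curv_addl h z : z \in l -> curv br d (h + z) = curv br d h.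
Proof.
move=> hz; have hc := zc_of_l hz.
by rewrite /curv linearD (l_d hz) addr0 !brDl !brDr (zc_r _ hc) (zc_l _ hc) (zc_l _ hc) !addr0.
Qed.

Lemma sym_odd x y : par true x -> par true y -> br x y = br y x.
Proof. by move=> hx hy; rewrite (antisym_par hx hy) /eps /= scaleN1r opprK. Qed.

Lemma curv_expand h e : par true h -> par true e ->
  curv br d (h + e) = curv br d h + d e + br h e + (2%:R : K)^-1 *: br e e.
Proof.
move=> hh he; rewrite /curv linearD !brDl !brDr (sym_odd he hh).
have -> : br h h + br h e + (br h e + br e e) = br h h + (br h e + br h e) + br e e.
  by rewrite !addrA.
rewrite scalerDr scalerDr half_double !addrA; congr (_ + _ + _).
by rewrite -!addrA; congr (_ + _); rewrite addrC.
Qed.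


Lemma iter0 s n : iter n (br s) 0 = 0.
Proof. by elim: n => //= n ->; rewrite br0r. Qed.
Lemma iterD s n x y : iter n (br s) (x + y) = iter n (br s) x + iter n (br s) y.
Proof. by elim: n => //= n ->; rewrite brDr. Qed.
Lemma iterZ s n a x : iter n (br s) (a *: x) = a *: iter n (br s) x.
Proof. by elim: n => //= n ->; rewrite brZr. Qed.
Lemma iterN s n x : iter n (br s) (- x) = - iter n (br s) x.
Proof. by elim: n => //= n ->; rewrite brNr. Qed.
Lemma iterB s n x y : iter n (br s) (x - y) = iter n (br s) x - iter n (br s) y.
Proof. by rewrite iterD iterN. Qed.

Lemma iter_par s b n y : par false s -> par b y -> par b (iter n (br s) y).
Proof. by move=> hs hy; elim: n => //= n IH; have := par_br hs IH. Qed.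
Lemma iter_P s p n y : P 2 s -> P p y -> P (n.*2 + p) (iter n (br s) y).
Proof.
move=> hs hy; elim: n => //= n IH; have := P_br hs IH.
by rewrite doubleS addnA add2n.
Qed.
Lemma iter_big s n y : P 2 s -> (N < n.*2)%N -> iter n (br s) y = 0.
Proof.
move=> hs hn; apply: P_top; apply: (@P_le (n.*2 + 0)); first by rewrite addn0.
by apply: iter_P => // k; rewrite ltn0.
Qed.

Lemma kme_par s : kminus_even (fun n => proj n) s -> par false s.
Proof. by move=> hs n hn; apply: hs; move: hn; case: (odd n). Qed.
Lemma kme_P s : kminus_even (fun n => proj n) s -> P 2 s.
Proof. by move=> hs [|[|n]] // _; apply: hs. Qed.
Lemma kmo_par x : kminus_odd (fun n => proj n) x <-> par true x.
Proof.
split=> hx n hn; apply: hx; move: hn; by case: (odd n).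
Qed.

Lemma rev_sum n (F : nat -> V) : \sum_(i < n.+1) F i = \sum_(i < n.+1) F (n - i)%N.
Proof.
rewrite [LHS](reindex_inj rev_ord_inj) /=; apply: eq_bigr => i _.
by rewrite ?subSS.
Qed.

Lemma trunc_sum (F : nat -> V) M M' : (forall k, (M <= k)%N -> F k = 0) -> (M <= M')%N ->
  \sum_(k < M') F k = \sum_(k < M) F k.
Proof.
move=> hF hM; rewrite [RHS](big_ord_widen _ F hM) [RHS]big_mkcond /=; apply: eq_bigr => i _.
by case: ifP => // /negbT; rewrite -leqNgt => /hF ->.
Qed.

Lemma cauchy (h : nat -> nat -> V) M :
  \sum_(n < M) \sum_(a < n.+1) h a (n - a)%N = \sum_(a < M) \sum_(b < (M - a)%N) h a b.
Proof.
elim: M => [|M IH]; first by rewrite !big_ord0.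
rewrite big_ord_recr /= IH big_ord_recr /= [RHS]big_ord_recr /= subSnn big_ord1 subnn.
rewrite addrA; congr (_ + _); rewrite -big_split /=; apply: eq_bigr => i _.
by rewrite subSn ?big_ord_recr //; apply: ltnW.
Qed.

Section Gauge.
Variables (s f : V).
Hypothesis hs : par false s.
Hypothesis hs2 : P 2 s.
Hypothesis hf : par true f.

Definition ga n := (n`!%:R : K)^-1 *: iter n (br s) f.
Definition gb n := if n is n'.+1 then (n`!%:R : K)^-1 *: iter n' (br s) (d s) else 0.
Definition gg n := ga n - gb n.
Definition gc n := d (gg n) + (2%:R : K)^-1 *: \sum_(a < n.+1) br (gg a) (gg (n - a)%N).

Lemma par_ds : par true (d s).
Proof. exact: (par_d hs). Qed.

Lemma par_gg n : par true (gg n).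
Proof.
apply: parB; first by apply: parZ; apply: iter_par.
by case: n => [|n] /=; [apply: par0 | apply: parZ; apply: iter_par => //; apply: par_ds].
Qed.
Lemma par_Agg n : par true (br s (gg n)).
Proof. by have := par_br hs (par_gg n). Qed.

Lemma gg_rec n : (n.+1)%:R *: gg n.+1 = br s (gg n) - (if n == 0 then d s else 0).
Proof.
rewrite /gg /ga /gb scalerBr !scalerA factS natrM invfM mulrA mulfV ?natS_neq0 // mul1r.
case: n => [|n] /=.
  by rewrite fact0 invr1 !scale1r brBr br0r subr0.
by rewrite brBr !brZr subr0.
Qed.

Lemma gc_rec n : (n.+1)%:R *: gc n.+1 = br s (gc n).
Proof.
have step1 : (n.+1)%:R *: \sum_(a < n.+2) br (gg a) (gg (n.+1 - a)%N) =
    2%:R *: \sum_(a < n.+2) a%:R *: br (gg a) (gg (n.+1 - a)%N).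
  have e : \sum_(a < n.+2) (n.+1 - a)%N%:R *: br (gg a) (gg (n.+1 - a)%N) =
           \sum_(a < n.+2) a%:R *: br (gg a) (gg (n.+1 - a)%N).
    rewrite (@rev_sum n.+1 (fun a => (n.+1 - a)%N%:R *: br (gg a) (gg (n.+1 - a)%N))).
    apply: eq_bigr => i _; have hi : (i <= n.+1)%N := ltn_ord i.
    by rewrite (subKn hi) (sym_odd (par_gg (n.+1 - i)%N) (par_gg i)).
  rewrite [in RHS]scaler_nat mulr2n -{2}e -big_split scaler_sumr /=.
  apply: eq_bigr => i _; have hi : (i <= n.+1)%N := ltn_ord i.
  by rewrite -scalerDl -natrD (subnKC hi).
have step2 : \sum_(a < n.+2) a%:R *: br (gg a) (gg (n.+1 - a)%N) =
    \sum_(a < n.+1) br (br s (gg a)) (gg (n - a)%N) - br (d s) (gg n).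
  rewrite big_ord_recl /= scale0r add0r.
  rewrite (eq_bigr (fun i : 'I_n.+1 => br (br s (gg i)) (gg (n - i)%N)
      - br (if nat_of_ord i == 0%N then d s else 0) (gg (n - i)%N))); last first.
    move=> i _; rewrite /bump /= add1n subSS -brZl gg_rec brBl.
    by [].
  rewrite sumrB; congr (_ - _).
  rewrite big_ord_recl /= subn0 big1 ?addr0 // => i _ /=.
  by rewrite br0l.
have hAC : forall a b c : V, a + b + (c - a) = b + c.
  by move=> a b c; rewrite addrC addrA subrK addrC.
have hdd : d (if n == 0%N then d s else 0) = 0.
  by case: (n == 0%N); rewrite ?dd ?linear0.
rewrite /gc scalerDr.
have -> : (n.+1)%:R *: d (gg n.+1) = d ((n.+1)%:R *: gg n.+1) by rewrite linearZ.
rewrite gg_rec linearB hdd subr0 (leibniz_par _ hs) /eps scale1r.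
rewrite scalerA mulrC -scalerA step1 step2 scalerA mulVf ?scale1r; last exact: (natS_neq0 1).
rewrite hAC brDr brZr br_sumr.
rewrite [in RHS](eq_bigr (fun a : 'I_n.+1 => br (br s (gg a)) (gg (n - a)%N) + br (gg a) (br s (gg (n - a)%N)))); last first.
  by move=> a _; rewrite (jacobi_par _ hs (par_gg a)) /eps /= scale1r.
rewrite big_split /=.
have -> : \sum_(a < n.+1) br (gg a) (br s (gg (n - a)%N)) = \sum_(a < n.+1) br (br s (gg a)) (gg (n - a)%N).
  rewrite (@rev_sum n (fun a => br (gg a) (br s (gg (n - a)%N)))); apply: eq_bigr => i _.
  rewrite subKn ?(sym_odd (par_gg _) (par_Agg _)) //.
  by rewrite -ltnS.
by rewrite half_double.
Qed.

Lemma gc_formula n : gc n = (n`!%:R : K)^-1 *: iter n (br s) (gc 0).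
Proof.
elim: n => [|n IH]; first by rewrite fact0 invr1 scale1r.
apply: (@scalerI _ _ ((n.+1)%:R : K)); first exact: natS_neq0.
rewrite gc_rec IH brZr /= scalerA factS natrM invfM mulrA mulfV ?natS_neq0 // mul1r.
by [].
Qed.

Lemma gc0 : gc 0 = curv br d f.
Proof.
rewrite /gc /curv big_ord1 /= /gg /ga /gb fact0 invr1 scale1r subr0.
by [].
Qed.
Lemma gg_big k : (N.+2 <= k)%N -> gg k = 0.
Proof.
move=> hk; rewrite /gg /ga (iter_big _ hs2); last by rewrite -addnn; lia.
rewrite scaler0 sub0r.
case: k hk => [|k] //= hk; rewrite (iter_big _ hs2) ?scaler0 ?oppr0 //.
rewrite -addnn; lia.
Qed.

Lemma gauge_sum : gauge N br d s f = \sum_(k < N.+2) gg k.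
Proof.
have h0 : iter N.+1 (br s) f = 0 by apply: (iter_big _ hs2); rewrite -addnn; lia.
rewrite /gauge /gg sumrB [in RHS]big_ord_recr /= /ga h0 scaler0 addr0.
by rewrite [\sum_(i < N.+2) gb i]big_ord_recl /= add0r.
Qed.



Lemma curv_sum : curv br d (\sum_(k < N.+2) gg k) = \sum_(n < N.+2 + N.+2) gc n.
Proof.
set M := N.+2.
rewrite /curv /gc [in RHS]big_split /= -scaler_sumr linear_sum.
congr (_ + _).
  rewrite (@trunc_sum (fun k => d (gg k)) M (M + M)) //; last exact: leq_addr.
  by move=> k hk; rewrite gg_big ?linear0.
congr (_ *: _).
rewrite (cauchy (fun a b => br (gg a) (gg b))).
rewrite (@trunc_sum (fun a => \sum_(b < (M + M - a)%N) br (gg a) (gg b)) M (M + M)); last first.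
- exact: leq_addr.
- by move=> a ha; rewrite big1 // => b _; rewrite (gg_big ha) br0l.
rewrite br_suml; apply: eq_bigr => a _.
rewrite br_sumr (@trunc_sum (fun b => br (gg a) (gg b)) M); last first.
- have := ltn_ord a; lia.
- by move=> b hb; rewrite (gg_big hb) br0r.
by [].
Qed.

Hypothesis hzc : zc (curv br d f).

Lemma iter_gc0 n : (0 < n)%N -> iter n (br s) (gc 0) = 0.
Proof. by case: n => [//|n] _; rewrite iterSr gc0 (zc_r _ hzc) iter0. Qed.

Lemma gauge_curv : curv br d (gauge N br d s f) = curv br d f.
Proof.
rewrite gauge_sum curv_sum big_ord_recl big1 ?addr0.
  by rewrite gc_formula /= fact0 invr1 scale1r gc0.
move=> i _; rewrite gc_formula iter_gc0 ?scaler0 //.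
Qed.

Lemma par_gauge : par true (gauge N br d s f).
Proof. by rewrite gauge_sum; apply: par_sum => i _; apply: par_gg. Qed.
End Gauge.

Lemma par_P1 x : par true x -> P 1 x.
Proof. by move=> hx [|n] // _; apply: hx. Qed.
Lemma homog_P n y : homog (fun n => proj n) n y -> P n y.
Proof. by move=> hy k hk; rewrite (proj_homog _ hy); case: eqP => // e; move: hk; rewrite e ltnn. Qed.
Lemma homog_par n y : homog (fun n => proj n) n y -> par (odd n) y.
Proof. by move=> hy k hk; rewrite (proj_homog _ hy); case: eqP => // e; move: hk; rewrite e eqxx. Qed.

Lemma helpAC (a1 a b1 b e x : V) : a1 - (b1 + (x + e)) - (a - b) + x = (a1 - a) - (b1 - b) - e.
Proof.
rewrite !opprD !opprK !addrA.
rewrite (addrAC _ (- x)) (addrAC _ (-x)) (addrAC _ (-x)) addrNK.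
rewrite (addrAC _ (- e)) (addrAC _ (- e)).
by rewrite (addrAC _ (-b1)) .
Qed.

Lemma perturb s t f q : P 2 s -> P q.+2 t -> P 1 f ->
  P q.+3 (gauge N br d (s + t) f - gauge N br d s f + d t).
Proof.
move=> hs ht hf.
have hst : P 2 (s + t) by apply: PD => //; apply: P_le ht.
have IT : forall m y, P 1 y -> P q.+3 (iter m (br (s + t)) y - iter m (br s) y).
  move=> m y hy; elim: m => [|m IH] /=; first by rewrite subrr; apply: P0.
  rewrite brDl addrAC -brBr; apply: PD.
    apply: (@P_le (2 + q.+3)); first by apply: leq_addl.
    exact: P_br.
  have hY : P 1 (iter m (br (s + t)) y).
    by apply: (P_le _ (iter_P (n := m) hst hy)); apply: leq_addl.
  by have := P_br ht hY; rewrite addn1.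
have hds : P 1 (d s) by apply: P_d.
have hdt : P q.+1 (d t) by apply: P_d.
rewrite /gauge linearD.
rewrite [X in (_ - X) - _ + _](eq_bigr (fun m : 'I_N.+1 => ((m.+1)`!%:R : K)^-1 *: iter m (br (s + t)) (d s)
   + ((m.+1)`!%:R : K)^-1 *: iter m (br (s + t)) (d t))); last first.
  by move=> m _; rewrite iterD scalerDr.
rewrite big_split /= [\sum_(i < N.+1) ((i.+1)`!%:R : K)^-1 *: iter i (br (s + t)) (d t)]big_ord_recl /= factS fact0 muln1 invr1 scale1r.
rewrite helpAC; apply: PB; first apply: PB.
- rewrite -sumrB; apply: P_sum => m _; rewrite -scalerBr; apply: PZ; exact: IT.
- rewrite -sumrB; apply: P_sum => m _; rewrite -scalerBr; apply: PZ; exact: IT.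
- apply: P_sum => m _; apply: PZ; rewrite /bump /= ?add1n ?add0n -/(iter m.+1 (br (s + t)) (d t)).
  apply: (@P_le (m.+1.*2 + q.+1)); last exact: iter_P.
  by rewrite doubleS; lia.
Qed.

Lemma helpAC2 (f' G G' z l1 p e : V) :
  f' - (G' + (z + l1)) = (f' - (G + z) - p) + (G - G' + e) + (p - (l1 + e)).
Proof.
rewrite !opprD !addrA.
rewrite (addrAC _ (-p)) (addrAC _ (-p)) (addrAC _ (-p)) subrK.
rewrite (addrAC _ (- l1) (- e)) addrK (addrAC _ (- z) G) subrK.
by rewrite (addrAC _ (- z) (- G')).
Qed.

Section Sol.
Variable X : V.
Hypotheses (HXc : central br X) (HXe : even_elt (fun n => proj n) X) (HdX : d X = 0).

Lemma par_X : par false X.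
Proof. by move=> n hn; apply: HXe; move: hn; case: (odd n). Qed.
Lemma par_curv f : par true f -> par false (curv br d f).
Proof.
move=> hf; apply: parD; first exact: (par_d hf).
by apply: parZ; exact: (par_br hf hf).
Qed.
Lemma zc_curv f : curv br d f - X \in l -> zc (curv br d f).
Proof.
move=> h; rewrite -(subrK X (curv br d f)) addrC.
by apply: zcD; [apply: central_zc | apply: zc_of_l].
Qed.

Lemma bianchi f : par true f -> d (curv br d f) = br (curv br d f) f.
Proof.
move=> hf; have hdf : par false (d f) by exact: (par_d hf).
have hff : par false (br f f) by exact: (par_br hf hf).
have hT : br f (br f f) = 0.
  have hJ := jacobi_par f hf hf.
  have hA := antisym_par hff hf.
  rewrite /eps /= scale1r in hA; rewrite /eps /= scaleN1r hA in hJ.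
  have h3 : (3%:R : K) *: br f (br f f) = 0.
    by rewrite scaler_nat mulrS mulr2n {1}hJ addrACA !addNr addr0.
  by move: h3 => /eqP; rewrite scaler_eq0 (negPf (natS_neq0 2)) /= => /eqP.
rewrite /curv linearD dd add0r linearZ (leibniz_par _ hf) /eps.
rewrite (antisym_par hf hdf) /eps /= scale1r scaleN1r opprK half_double.
rewrite brDl brZl (antisym_par hff hf) /eps /= scale1r hT oppr0 scaler0 addr0.
by [].
Qed.

Lemma exist_step p : (exists f, par true f /\ forall k, (k < p)%N -> proj k (curv br d f - X) \in l) ->
  exists f, par true f /\ forall k, (k < p.+1)%N -> proj k (curv br d f - X) \in l.
Proof.
case=> f [hf hlow].
have hR : par false (curv br d f - X) by apply: parB; [apply: par_curv | apply: par_X].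
case hp: (odd p).
  exists f; split=> // k; rewrite ltnS leq_eqVlt; case/orP=> [/eqP ->|]; last exact: hlow.
  by rewrite hR ?hp // l0.
set R := curv br d f - X.
set r := proj p R.
have hdr : d r = 0.
  case: p hlow hp @r => [|q] hk hp r; first by apply: d_homog0; apply: homog_proj.
  rewrite /r -proj_d linearB HdX subr0 bianchi //.
  set Rl := \sum_(k < q.+1) proj k R.
  have hRl : Rl \in l by apply: l_sum => i _; apply: hk.
  have -> : curv br d f = X + Rl + (R - Rl) by rewrite -addrA (addrC Rl) subrK /R addrC subrK.
  rewrite 2!brDl (zc_l _ (central_zc HXc)) (zc_l _ (zc_of_l hRl)) !add0r.
  have hP : P q.+1 (R - Rl).
    move=> j hj; rewrite linearB linear_sum.
    rewrite (@sum_delta (fun k => proj j (proj k R)) _ j).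
    - by rewrite proj_id subrr.
    - by move=> m hm; rewrite projK eq_sym (negPf hm).
    - by move=> hj'; move: hj; rewrite ltnNge hj'.
  have := P_br hP (par_P1 hf); rewrite addn1; apply.
  lia.
have [l1 [y [hl1 hl1h hy hry]]] := l_surj (homog_proj p R) hdr.
have hpy : par true y by have := homog_par hy; rewrite /= hp.
exists (f - y); split; first exact: parB.
move=> k hk.
have e : curv br d (f - y) - X = R - d y - br f y + (2%:R : K)^-1 *: br y y.
  rewrite (curv_expand hf (parN hpy)) linearN brNr brNl brNr opprK /R.
  by rewrite (addrAC _ (- X)) (addrAC _ (- X)) (addrAC _ (- X)).
rewrite e linearD linearB linearB linearZZ.
have hPy : P p.+1 y := homog_P hy.
rewrite (P_br (par_P1 hf) hPy); last by rewrite add1n; apply: (leq_trans hk).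
rewrite (P_br hPy hPy); last by apply: (leq_trans hk); rewrite addSn ltnS leq_addr.
rewrite oppr0 scaler0 !addr0 proj_d (proj_homog _ hy) eqSS.
move: hk; rewrite ltnS leq_eqVlt; case/orP=> [/eqP ->|hk].
  by rewrite eqxx hry addrK.
by rewrite (ltn_eqF hk) linear0 subr0; apply: hlow.
Qed.

Definition Sx f := par true f /\ curv br d f - X \in l.

Lemma part2 f s z : Sx f -> kminus_even (fun n => proj n) s -> z \in l ->
  kminus_odd (fun n => proj n) z ->
  Sx (gauge N br d s f + z) /\ curv br d (gauge N br d s f + z) = curv br d f.
Proof.
case=> hf hc hs hz hzo.
have hcurv : curv br d (gauge N br d s f + z) = curv br d f.
  by rewrite curv_addl // (gauge_curv (kme_par hs) (kme_P hs) hf (zc_curv hc)).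
split=> //; split; last by rewrite hcurv.
apply: parD; first exact: (par_gauge (kme_par hs) (kme_P hs) hf).
by apply/kmo_par.
Qed.

Lemma trans_step f f' p : Sx f -> Sx f' ->
  (exists s z, [/\ kminus_even (fun n => proj n) s, z \in l, kminus_odd (fun n => proj n) z
                 & P p (f' - (gauge N br d s f + z))]) ->
  exists s z, [/\ kminus_even (fun n => proj n) s, z \in l, kminus_odd (fun n => proj n) z
                 & P p.+1 (f' - (gauge N br d s f + z))].
Proof.
move=> hSf hSf' [s [z [hs hz hzo hP]]].
have [hSh hch] := part2 hSf hs hz hzo.
set h := gauge N br d s f + z.
have hph : par true h := hSh.1.
have hpd : par true (f' - h) by apply: parB; [exact: hSf'.1 | exact: hph].
case hp: (odd p); last first.
  exists s, z; split => // n; rewrite ltnS leq_eqVlt; case/orP => [/eqP ->|]; last exact: hP.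
  by apply: hpd; rewrite hp.
case: p hP hp => [//|q] hP hp.
have hcf : curv br d f' = curv br d h + d (f' - h) + br h (f' - h)
    + (2%:R : K)^-1 *: br (f' - h) (f' - h).
  by rewrite -(curv_expand hph hpd) addrC subrK.
have hin : proj q (curv br d f' - curv br d h) \in l.
  rewrite (_ : curv br d f' - curv br d h = (curv br d f' - X) - (curv br d h - X)).
    by apply: l_proj; apply: lB; [exact: hSf'.2 | exact: hSh.2].
  by rewrite opprB addrA subrK.
have e1 : proj q (curv br d f' - curv br d h) = d (proj q.+1 (f' - h)).
  rewrite hcf (addrAC _ _ (- curv br d h)) (addrAC _ _ (- curv br d h)).
  rewrite (addrAC _ _ (- curv br d h)) subrr add0r [proj q (_ + _)]linearD [proj q (_ + _)]linearD [proj q (_ *: _)]linearZZ proj_d.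
  rewrite (P_br (par_P1 hph) hP); last by rewrite add1n; lia.
  rewrite (P_br hP hP); last by lia.
  by rewrite scaler0 !addr0.
have hd0 : d (proj q.+1 (f' - h)) = 0.
  apply: (@l_inj q _ (proj q.+1 (f' - h))).
  - by rewrite -e1.
  - by apply: d_homog; apply: homog_proj.
  - exact: homog_proj.
  - by [].
have [l1 [y [hl1 hl1h hy hdel]]] := l_surj (homog_proj q.+1 (f' - h)) hd0.
exists (s - y), (z + l1); split.
- move=> n hn; rewrite linearB hs // (proj_homog _ hy); case: eqP => [e|_]; last by rewrite subr0.
  by move: hn hp; rewrite e /=; case: (odd q).
- exact: lD.
- move=> n hn; rewrite linearD hzo // (proj_homog _ hl1h); case: eqP => [e|_]; last by rewrite addr0.
  by move: hn; rewrite e hp.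
rewrite (helpAC2 _ (gauge N br d s f) _ _ _ (proj q.+1 (f' - h)) (d y)) -/h.
have -> : proj q.+1 (f' - h) - (l1 + d y) = 0 by rewrite hdel subrr.
rewrite addr0.
apply: PD.
  move=> n hn; rewrite linearB projK; case: eqP => [->|ne]; first by rewrite subrr.
  rewrite subr0; apply: hP; move: hn ne; lia.
have hPy : P q.+2 y := homog_P hy.
have hs' : P 2 (s - y).
  by apply: PB; [exact: kme_P | apply: (P_le _ hPy)].
have := perturb hs' hPy (par_P1 hSf.1); rewrite subrK => H.
by apply: (P_le _ H).
Qed.
End Sol.
End Main.
Theorem theorem3p8 (K : fieldType) (charK : [pchar K] =i pred0)
  (V : lmodType K) (N : nat) (proj : nat -> {linear V -> V})
  (br : V -> V -> V) (d : {linear V -> V}) (l : {pred V})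
  (Hk : dgla N proj br d)
  (Hl : central_quasi_iso (fun n => proj n) br d l)
  (X : V) (HXc : central br X) (HXe : even_elt (fun n => proj n) X)
  (HdX : d X = 0) :
  let S := fun f : V => kminus_odd (fun n => proj n) f /\ curv br d f - X \in l in
  (* (1) the solution set is a nonempty homogeneous space for
     exp(k^-_even) x l^-_odd acting by (s, l0).f = exp(s).f + l0 *)
  [/\ (exists f, S f),
      (forall f s l0, S f -> kminus_even (fun n => proj n) s ->
         l0 \in l -> kminus_odd (fun n => proj n) l0 ->
         S (gauge N br d s f + l0)),
      (forall f f', S f -> S f' ->
         exists s l0, [/\ kminus_even (fun n => proj n) s, l0 \in l,
                          kminus_odd (fun n => proj n) l0
                        & f' = gauge N br d s f + l0])
    & (* (2) curv f - X is independent of the solution f *)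
      (forall f f', S f -> S f' -> curv br d f - X = curv br d f' - X)].

Proof.
move=> S.
have EX : forall p, exists f, par proj true f /\
    forall k, (k < p)%N -> proj k (curv br d f - X) \in l.
  elim=> [|p IH]; first by exists 0; split; [apply: par0 | by []].
  exact: (exist_step Hk charK Hl HXc HXe HdX IH).
have P2 : forall f s z, S f -> kminus_even (fun n => proj n) s -> z \in l ->
    kminus_odd (fun n => proj n) z ->
    S (gauge N br d s f + z) /\ curv br d (gauge N br d s f + z) = curv br d f.
  move=> f s z [hf hc] hs hz hzo.
  have [[h1 h2] h3] := part2 Hk charK Hl HXc (conj ((kmo_par _ _).1 hf) hc) hs hz hzo.
  by split=> //; split=> //; apply/kmo_par.
have TR : forall f f', S f -> S f' ->
    exists s z, [/\ kminus_even (fun n => proj n) s, z \in l,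
                    kminus_odd (fun n => proj n) z & f' = gauge N br d s f + z].
  move=> f f' [hf hc] [hf' hc'].
  have hSf : Sx proj br d l X f := conj ((kmo_par _ _).1 hf) hc.
  have hSf' : Sx proj br d l X f' := conj ((kmo_par _ _).1 hf') hc'.
  have H : forall p, exists s z, [/\ kminus_even (fun n => proj n) s, z \in l,
      kminus_odd (fun n => proj n) z & P proj p (f' - (gauge N br d s f + z))].
    elim=> [|p IH].
      exists 0, 0; split.
      - by move=> n _; rewrite linear0.
      - exact: (l0 Hl).
      - by move=> n _; rewrite linear0.
      - by move=> n; rewrite ltn0.
    exact: (trans_step Hk charK Hl HXc hSf hSf' IH).
  have [s [z [hs hz hzo hP]]] := H N.+1.
  exists s, z; split => //.
  by apply/eqP; rewrite -subr_eq0; apply/eqP; exact: (P_top Hk hP).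
split.
- have [f [hf hk]] := EX N.+1.
  by exists f; split; [apply/kmo_par | exact: (l_of_proj Hk Hl hk)].
- by move=> f s z hSf hs hz hzo; have [] := P2 f s z hSf hs hz hzo.
- exact: TR.
- move=> f f' hSf hSf'; have [s [z [hs hz hzo ->]]] := TR f f' hSf hSf'.
  by have [_ ->] := P2 f s z hSf hs hz hzo.
Qed.
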